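(* Let $\mathbf{A}$ and $\mathbf{B}$ be algebras in the same language and let $e$ be a unary term which is idempotent, separating and dense for both $\mathbf{A}$ and $\mathbf{B}$. Then $\mathbf{A}\cong\mathbf{B}$ if and only if $e(\mathbf{A})\cong e(\mathbf{B})$.
   Context: A unary term $e$ is idempotent for $\mathbf{A}$ if $\mathbf{A}\models e(e(x))=e(x)$. The localization $e(\mathbf{A})$ is the algebra with universe $e(A)$ whose fundamental operation symbols are the symbols $et$, one for each term $t$ in the language of $\mathbf{A}$, where $et$ is interpreted as the restriction to $e(A)$ of the term operation $e(t(x_1,\dots,x_n))$ of $\mathbf{A}$ (so $e(\mathbf{A})$ and $e(\mathbf{B})$ have the same similarity type). The term $e$ separates $\mathbf{A}$ if for all $a\neq b$ in $A$ there is a unary term $g$ with $e(g(a))\neq e(g(b))$. The term $e$ is dense for $\mathbf{A}$ if $\mathbf{A}$ is generated by $e(A)$. *)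

(* Defs.v *)
From mathcomp Require Import all_boot.
Set Implicit Arguments. Unset Strict Implicit. Unset Printing Implicit Defensive.

Record signature := Signature { op : Type ; arity : op -> nat }.

Inductive term (L : signature) (V : Type) : Type :=
| Var : V -> term L V
| App : forall f : op L, ('I_(arity f) -> term L V) -> term L V.
Arguments Var {L V} _.
Arguments App {L V} f _.

Record algebra (L : signature) := Algebra {
  carrier :> Type ;
  interp : forall f : op L, ('I_(arity f) -> carrier) -> carrier }.

Fixpoint eval (L : signature) (A : algebra L) (V : Type) (env : V -> A)
  (t : term L V) : A :=
  match t with
  | Var v => env v
  | App f ts => @interp L A f (fun i => @eval L A V env (ts i))
  end.

Definition uterm (L : signature) := term L 'I_1.
Definition ueval (L : signature) (A : algebra L) (e : uterm L) (a : A) : A :=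
  eval (fun _ => a) e.

Definition idempotent_for L (A : algebra L) (e : uterm L) : Prop :=
  forall x : A, ueval e (ueval e x) = ueval e x.

Definition separates L (A : algebra L) (e : uterm L) : Prop :=
  forall a b : A, a <> b -> exists g : uterm L, ueval e (ueval g a) <> ueval e (ueval g b).

Definition subuniverse L (A : algebra L) (S : A -> Prop) : Prop :=
  forall (f : op L) (a : 'I_(arity f) -> A), (forall i, S (a i)) -> S (@interp L A f a).

Definition generated_by L (A : algebra L) (X : A -> Prop) : Prop :=
  forall S : A -> Prop, subuniverse S -> (forall x, X x -> S x) -> forall x, S x.

Definition dense_for L (A : algebra L) (e : uterm L) : Prop :=
  generated_by (fun x : A => exists a : A, x = ueval e a).

(* The language of localizations: one symbol [e t] for every term t;
   a term t(x_0,...,x_{n-1}) in n variables gives an n-ary symbol. *)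
Definition loc_signature (L : signature) : signature :=
  @Signature {n : nat & term L 'I_n} (fun s => projT1 s).

Definition loc_carrier L (A : algebra L) (e : uterm L) : Type :=
  {x : A | exists a : A, x = ueval e a}.

Definition loc_op L (A : algebra L) (e : uterm L) (s : op (loc_signature L))
  (xs : 'I_(arity s) -> loc_carrier A e) : loc_carrier A e :=
  exist _ (ueval e (eval (fun i => proj1_sig (xs i)) (projT2 s)))
          (ex_intro _ _ erefl).

Definition localization L (A : algebra L) (e : uterm L) : algebra (loc_signature L) :=
  @Algebra (loc_signature L) (loc_carrier A e) (@loc_op L A e).

Definition is_hom L (A B : algebra L) (h : A -> B) : Prop :=
  forall (f : op L) (a : 'I_(arity f) -> A),
    h (@interp L A f a) = @interp L B f (fun i => h (a i)).

Definition isomorphic L (A B : algebra L) : Prop :=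
  exists h : A -> B, is_hom h /\ bijective h.

(* Main.v *)
Require Import Defs.
From Stdlib Require Import FunctionalExtensionality ProofIrrelevance IndefiniteDescription Classical.
From mathcomp Require Import all_boot.
Set Implicit Arguments. Unset Strict Implicit. Unset Printing Implicit Defensive.

Fixpoint tsubst L V W (s : V -> term L W) (t : term L V) : term L W :=
  match t with Var v => s v | App f ts => App f (fun i => tsubst s (ts i)) end.

Lemma eval_subst L (A : algebra L) V W (s : V -> term L W) (env : W -> A) t :
  eval env (tsubst s t) = eval (fun v => eval env (s v)) t.
Proof.
elim: t => [v|f ts IH] //=.
by f_equal; apply: functional_extensionality => i; exact: IH.
Qed.

Lemma eval_hom L (A B : algebra L) (h : A -> B) : is_hom h ->
  forall V (env : V -> A) t, h (eval env t) = eval (fun v => h (env v)) t.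
Proof.
move=> hh V env; elim=> [v|f ts IH] //=.
rewrite hh; f_equal; apply: functional_extensionality => i; exact: IH.
Qed.

Lemma loc_eq L (A : algebra L) e (a b : loc_carrier A e) :
  proj1_sig a = proj1_sig b -> a = b.
Proof.
case: a b => x px [y py] /= exy; subst y; by rewrite (proof_irrelevance _ px py).
Qed.

Definition Rep L (A : algebra L) X (v : X -> A) (x : A) :=
  exists n (t : term L 'I_n) (env : 'I_n -> X), x = eval (fun i => v (env i)) t.

Lemma combine L (A : algebra L) X (v : X -> A) k (xs : 'I_k -> A) :
  (forall i, Rep v (xs i)) -> exists n (env : 'I_n -> X) (ts : 'I_k -> term L 'I_n),
    forall i, xs i = eval (fun u => v (env u)) (ts i).
Proof.
elim: k xs => [|k IH] xs hx.
  have e0 : 'I_0 -> X by case=> m hm; exfalso; move: hm; rewrite ltn0.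
  have t0 : 'I_0 -> term L 'I_0 by case=> m hm; exfalso; move: hm; rewrite ltn0.
  by exists 0, e0, t0; case=> m hm; exfalso; move: hm; rewrite ltn0.
have [n [env [ts hts]]] := IH (fun j => xs (lift ord0 j)) (fun j => hx _).
have [m [t0 [env0 h0]]] := hx ord0.
exists (m + n), (fun i => match split i with inl a => env0 a | inr b => env b end),
  (fun i => match unlift ord0 i with
            | Some j => tsubst (fun u => Var (rshift m u)) (ts j)
            | None => tsubst (fun u => Var (lshift n u)) t0 end).
move=> i; case: (unliftP ord0 i) => [j ->|->]; rewrite eval_subst /=.
- rewrite hts; f_equal; apply: functional_extensionality => u.
  by rewrite (unsplitK (inr u)).
- rewrite h0; f_equal; apply: functional_extensionality => u.
  by rewrite (unsplitK (inl u)).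
Qed.

Lemma core L (A B : algebra L) e (Phi : loc_carrier A e -> loc_carrier B e) :
  @is_hom _ (localization A e) (localization B e) Phi -> separates B e -> dense_for A e ->
  exists h : A -> B, is_hom h /\ forall a : loc_carrier A e, h (proj1_sig a) = proj1_sig (Phi a).
Proof.
move=> hP sepB dA.
pose R x y := exists n (t : term L 'I_n) (env : 'I_n -> loc_carrier A e),
  x = eval (fun i => proj1_sig (env i)) t /\ y = eval (fun i => proj1_sig (Phi (env i))) t.
have Rfun : forall x y y', R x y -> R x y' -> y = y'.
  move=> x y y' [n [t [env [-> ->]]]] [m [s [env' [exs ->]]]].
  case: (classic (eval (fun i => proj1_sig (Phi (env i))) t =
                  eval (fun i => proj1_sig (Phi (env' i))) s)) => // ne.
  have [g hg] := sepB _ _ ne; exfalso; apply: hg.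
  pose s1 : op (loc_signature L) := existT _ n (tsubst (fun _ => t) g).
  pose s2 : op (loc_signature L) := existT _ m (tsubst (fun _ => s) g).
  have E : Phi (@loc_op _ _ e s1 env) = Phi (@loc_op _ _ e s2 env').
    congr Phi; apply: loc_eq => /=; rewrite !eval_subst.
    by rewrite /ueval exs.
  have := f_equal (fun z => proj1_sig z) E.
  rewrite (hP s1 env) (hP s2 env') /= !eval_subst.
  done.
have total : forall x, exists y, R x y.
  move=> x; suff [n [t [env ->]]] : Rep (fun a : loc_carrier A e => proj1_sig a) x.
    by exists (eval (fun i => proj1_sig (Phi (env i))) t), n, t, env.
  apply: dA => [f a ha | y [a0 ->]].
    have [n [env [ts hts]]] := combine ha.
    exists n, (App f ts), env => /=; f_equal; apply: functional_extensionality => i.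
    exact: hts.
  by exists 1, (Var ord0), (fun _ => exist _ (ueval e a0) (ex_intro _ a0 erefl)).
pose h x := proj1_sig (constructive_indefinite_description _ (total x)).
have hR : forall x, R x (h x) := fun x => proj2_sig (constructive_indefinite_description _ (total x)).
exists h; split.
  move=> f xs.
  have hrep : forall i, Rep (fun a : loc_carrier A e => proj1_sig a) (xs i).
    by move=> i; have [n [t [env [E _]]]] := hR (xs i); exists n, t, env.
  have [n [env [ts hts]]] := combine hrep.
  have Ei : forall i, h (xs i) = eval (fun u => proj1_sig (Phi (env u))) (ts i).
    by move=> i; apply: Rfun (hR (xs i)) _; exists n, (ts i), env.
  have -> : (fun i => h (xs i)) = (fun i => eval (fun u => proj1_sig (Phi (env u))) (ts i)).
    by apply: functional_extensionality.
  apply: Rfun (hR _) _; exists n, (App f ts), env => /=; split => //.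
  by f_equal; apply: functional_extensionality.
move=> a; apply: Rfun (hR _) _.
by exists 1, (Var ord0), (fun _ => a).
Qed.

Theorem corollary2p4 (L : signature) (A B : algebra L) (e : uterm L) :
  idempotent_for A e -> separates A e -> dense_for A e ->
  idempotent_for B e -> separates B e -> dense_for B e ->
  (isomorphic A B <-> isomorphic (localization A e) (localization B e)).
Proof.
move=> _ sA dA _ sB dB; split.
- case=> h [hh [g gh hg]].
  have hu : forall a, h (ueval e a) = ueval e (h a) by move=> a; rewrite /ueval (eval_hom hh).
  have mA : forall x : loc_carrier A e, exists a, h (proj1_sig x) = ueval e a.
    by case=> x [a0 E] /=; exists (h a0); rewrite E.
  have mB : forall x : loc_carrier B e, exists a, g (proj1_sig x) = ueval e a.
    case=> x [b0 E] /=; exists (g b0); rewrite E.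
    by rewrite -{1}(hg b0) -hu gh.
  exists (fun x => exist _ (h (proj1_sig x)) (mA x)); split.
    by move=> s xs; apply: loc_eq => /=; rewrite hu (eval_hom hh).
  exists (fun x => exist _ (g (proj1_sig x)) (mB x)) => x; apply: loc_eq => /=.
    exact: gh.
  exact: hg.
- case=> Phi [hP [Psi PP PP']].
  have hPsi : @is_hom _ (localization B e) (localization A e) Psi.
    move=> s ys.
    have -> : ys = (fun i => Phi (Psi (ys i))) by apply: functional_extensionality => i; rewrite PP'.
    rewrite -hP PP; f_equal; apply: functional_extensionality => i; by rewrite PP'.
  have [hA [hhA eA]] := core hP sB dA.
  have [hB [hhB eB]] := core hPsi sA dB.
  exists hA; split => //; exists hB.
  + apply: dA => [f a ha | y [a0 ->]].
      by rewrite hhA hhB; f_equal; apply: functional_extensionality.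
    pose xa : loc_carrier A e := exist _ (ueval e a0) (ex_intro _ a0 erefl).
    by have := eA xa; rewrite /= => ->; rewrite eB PP.
  + apply: dB => [f a ha | y [a0 ->]].
      by rewrite hhB hhA; f_equal; apply: functional_extensionality.
    pose xb : loc_carrier B e := exist _ (ueval e a0) (ex_intro _ a0 erefl).
    by have := eB xb; rewrite /= => ->; rewrite eA PP'.
Qed.
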